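(* Let $n\ge2$ and $w\in\widetilde{\mathfrak S}_n$. A total order $\rho$ of $\mathrm{Inv}_2(w)$ is a reflection order of $w$ if and only if both of the following hold: (i) for each $[x,y,z]\in\binom{\mathbb Z}{3}_n$, the restriction of $\rho$ to $P([x,y,z])\cap\mathrm{Inv}_2(w)$ is either a prefix of $P([x,y,z])$ listed in lex order, or a suffix of $P([x,y,z])$ listed in antilex order; (ii) for each pair $[x,y],[x,y+n]\in\mathrm{Inv}_2(w)$, the element $[x,y]$ appears before $[x,y+n]$ in $\rho$.
   Context: The affine symmetric group $\widetilde{\mathfrak S}_n$ consists of bijections $w:\mathbb Z\to\mathbb Z$ with $w(x+n)=w(x)+n$ and $\sum_{i=1}^n w(i)=\binom{n+1}{2}$, under composition; $s_i$ ($i\in\mathbb Z/n\mathbb Z$) swaps $j,j+1$ for all $j\equiv i\pmod n$ and fixes other integers; a reduced word for $w$ is a shortest sequence $i_1\cdots i_\ell$ with $s_{i_1}\cdots s_{i_\ell}=w$. The reflection order of a reduced word $i_1\cdots i_\ell$ is $(\rho_1,\dots,\rho_\ell)$ with $\rho_j=(w^{(j)}(i_j),w^{(j)}(i_j+1))$, $w^{(j)}=s_{i_1}\cdots s_{i_{j-1}}$; reflection orders of $w$ are those of its reduced words, viewed as total orders of $\mathrm{Inv}_2(w)$ by identifying $(a,b)$ with $[a,b]$. $\binom{\mathbb Z}{m}_n$ is the set of $m$-subsets of $\mathbb Z$ with pairwise distinct residues mod $n$, modulo simultaneous translation by multiples of $n$ (for $m>1$), each written $[x_1,\dots,x_m]$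 with $x_1<\dots<x_m$. For $X=[x_1,\dots,x_m]$, $X_i$ is $X$ with $x_i$ removed; $P(X)=\{X_1,\dots,X_m\}$, lex order $(X_m,\dots,X_1)$, antilex order $(X_1,\dots,X_m)$; a prefix is a set $\{X_m,\dots,X_i\}$, a suffix a set $\{X_i,\dots,X_1\}$ (empty set counts as both). $\mathrm{Inv}_2(w)=\{[x,y]\in\binom{\mathbb Z}{2}_n: w^{-1}(x)>w^{-1}(y)\}$. *)

(* Defs.v *)
From HB Require Import structures.
From mathcomp Require Import all_boot all_order all_algebra.
Set Implicit Arguments. Unset Strict Implicit. Unset Printing Implicit Defensive.
Import Order.TTheory GRing.Theory Num.Theory.
Local Open Scope ring_scope.

Definition is_affine_perm (n : nat) (w : int -> int) : Prop :=
  bijective w /\ (forall x : int, w (x + n%:Z) = w x + n%:Z) /\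
  \sum_(i < n) w (i.+1)%:Z = ('C(n.+1, 2))%:Z.

(* The generator s_i, i in Z/nZ represented by i : 'I_n:
   swaps j and j+1 for all j = i (mod n). *)
Definition sgen (n : nat) (i : 'I_n) (j : int) : int :=
  if modz j n%:Z == modz (i : nat)%:Z n%:Z then j + 1
  else if modz (j - 1) n%:Z == modz (i : nat)%:Z n%:Z then j - 1 else j.

Definition word_prod (n : nat) (ws : seq 'I_n) : int -> int :=
  foldr (fun i f => sgen i \o f) id ws.

Definition is_word_for (n : nat) (w : int -> int) (ws : seq 'I_n) : Prop :=
  forall x : int, word_prod ws x = w x.

Definition is_reduced_word (n : nat) (w : int -> int) (ws : seq 'I_n) : Prop :=
  is_word_for w ws /\ forall ws' : seq 'I_n, is_word_for w ws' -> (size ws <= size ws')%N.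

(* Canonical representative of the class [min a b, max a b] in binom(Z,2)_n
   (modulo translation by multiples of n): first coordinate in [0, n). *)
Definition cls2 (n : nat) (a b : int) : int * int :=
  let x := Num.min a b in let y := Num.max a b in
  let k := divz x n%:Z in (x - k * n%:Z, y - k * n%:Z).

(* Reflection order of a word: rho_j = (w^(j)(i_j), w^(j)(i_j + 1)),
   w^(j) = s_{i_1} ... s_{i_(j-1)}, as (canonical) classes. *)
Fixpoint refl_aux (n : nat) (f : int -> int) (ws : seq 'I_n) : seq (int * int) :=
  match ws with
  | [::] => [::]
  | i :: t => cls2 n (f (i : nat)%:Z) (f ((i : nat)%:Z + 1)) :: refl_aux (f \o sgen i) t
  end.

Definition reflection_seq (n : nat) (ws : seq 'I_n) : seq (int * int) :=
  @refl_aux n id ws.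
Arguments reflection_seq n ws : clear implicits.

(* p (a canonical representative) belongs to Inv_2(w):
   [x,y] with x < y, distinct residues, w^{-1}(x) > w^{-1}(y). *)
Definition is_inv2 (n : nat) (w : int -> int) (p : int * int) : Prop :=
  (0 <= p.1 < n%:Z) /\ p.1 < p.2 /\ modz p.1 n%:Z != modz p.2 n%:Z /\
  exists a b : int, w a = p.1 /\ w b = p.2 /\ b < a.

(* A total order of Inv_2(w), given as the list of its elements in order. *)
Definition is_total_order_inv2 (n : nat) (w : int -> int) (rho : seq (int * int)) : Prop :=
  uniq rho /\ forall p, p \in rho <-> is_inv2 n w p.

Definition is_reflection_order (n : nat) (w : int -> int) (rho : seq (int * int)) : Prop :=
  exists ws : seq 'I_n, is_reduced_word w ws /\ reflection_seq n ws = rho.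

(* For X = [x,y,z]: X_3 = [x,y], X_2 = [x,z], X_1 = [y,z];
   lex order (X_3,X_2,X_1), antilex order (X_1,X_2,X_3).  A prefix in lex order
   is a take of the lex list; a suffix in antilex order is a take of the
   antilex list. *)
Definition cond_triples (n : nat) (rho : seq (int * int)) : Prop :=
  forall x y z : int, x < y -> y < z ->
    modz x n%:Z != modz y n%:Z -> modz x n%:Z != modz z n%:Z ->
    modz y n%:Z != modz z n%:Z ->
    let lexl := [:: cls2 n x y; cls2 n x z; cls2 n y z] in
    let alexl := [:: cls2 n y z; cls2 n x z; cls2 n x y] in
    let r := [seq p <- rho | p \in lexl] in
    exists k : nat, r = take k lexl \/ r = take k alexl.

Definition cond_pairs (n : nat) (rho : seq (int * int)) : Prop :=
  forall x y : int, x < y -> modz x n%:Z != modz y n%:Z ->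
    cls2 n x y \in rho -> cls2 n x (y + n%:Z) \in rho ->
    (index (cls2 n x y) rho < index (cls2 n x (y + n%:Z)) rho)%N.

(* Main.v *)
Require Import Defs.
From mathcomp Require Import all_boot all_order all_algebra.
From mathcomp Require Import zify.
Import Order.TTheory GRing.Theory Num.Theory.
Set Implicit Arguments. Unset Strict Implicit. Unset Printing Implicit Defensive.

Lemma take_pref (T : Type) (s : seq T) e j : exists j', take j s = take j' (rcons s e).
Proof.
case: (leqP (size s) j) => h.
  exists (size s). by rewrite take_oversize // -cats1 take_size_cat.
exists j. by rewrite -cats1 take_cat h.
Qed.

Lemma comb3 (T : eqType) (A B C : T) : A != B -> A != C -> B != C -> forall rho : seq T, uniq rho ->
  (forall j, ((B \in take j rho) ==> (A \in take j rho) || (C \in take j rho)) &&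
             ((A \in take j rho) ==> (C \in take j rho) ==> (B \in take j rho))) ->
  exists k, [seq p <- rho | p \in [:: A; B; C]] = take k [:: A; B; C] \/
            [seq p <- rho | p \in [:: A; B; C]] = take k [:: C; B; A].
Proof.
move=> nAB nAC nBC. elim/last_ind => [|r e IH]; first by exists 0; left.
rewrite rcons_uniq => /andP [enr U] Q.
have Q' : forall j, ((B \in take j r) ==> (A \in take j r) || (C \in take j r)) &&
             ((A \in take j r) ==> (C \in take j r) ==> (B \in take j r)).
  move=> j. have [j' ->] := take_pref r e j. exact: Q.
have [k IHk] := IH U Q'.
have := Q (size (rcons r e)). rewrite take_size filter_rcons.
case: ifP => he; last by move=> _; exists k.
have mem' : forall X, X \in [:: A; B; C] -> (X \in r) = (X \in [seq p <- r | p \in [:: A; B; C]]).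
  by move=> X hX; rewrite mem_filter hX.
rewrite !mem_rcons !in_cons.
rewrite (mem' A) ?(mem' B) ?(mem' C) ?inE ?eqxx ?orbT //.
move: enr; rewrite (mem' e) //.
have nBA : B != A by rewrite eq_sym. have nCA : C != A by rewrite eq_sym. have nCB : C != B by rewrite eq_sym.
move: he; rewrite !inE => /or3P [/eqP E|/eqP E|/eqP E]; subst e;
case: IHk => ->; case: k => [|[|[|k]]] /=; rewrite ?inE ?eqxx ?(negPf nAB) ?(negPf nAC) ?(negPf nBC) ?(negPf nBA) ?(negPf nCA) ?(negPf nCB) //= ?orbF;
  try (by exists 1; left); try (by exists 1; right); try (by exists 2; left); try (by exists 2; right);
  try (by exists 3; left); try (by exists 3; right).
all: try (by []).
Qed.

Lemma last3 (T : eqType) (A B C e : T) (s : seq T) k : A != B -> A != C -> B != C ->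
  (s = take k [:: A; B; C] \/ s = take k [:: C; B; A]) -> last e s = e -> s != [::] ->
  [/\ (e == C) ==> ~~ ((A \notin s) && (B \in s)),
      (e == B) ==> ~~ ((A \in s) && (C \in s)) &
      (e == A) ==> ~~ ((B \in s) && (C \notin s))].
Proof.
move=> nAB nAC nBC.
have nBA : B != A by rewrite eq_sym. have nCA : C != A by rewrite eq_sym. have nCB : C != B by rewrite eq_sym.
case=> ->; case: k => [|[|[|k]]] //= <- _;
rewrite !inE ?eqxx ?(negPf nAB) ?(negPf nAC) ?(negPf nBC) ?(negPf nBA) ?(negPf nCA) ?(negPf nCB) //.
Qed.

Lemma pref_take (T : Type) (s L : seq T) e k : rcons s e = take k L -> s = take (minn (size s) k) L.
Proof. move=> H. have := congr1 (take (size s)) H. by rewrite -cats1 take_size_cat // take_min. Qed.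

Local Open Scope ring_scope.

Lemma modeqP (a b N : int) : 0 < N -> modz a N = modz b N -> b = a + (divz b N - divz a N) * N.
Proof. move=> h e. have ha := divz_eq a N. have hb := divz_eq b N. rewrite e in ha. lia. Qed.

Lemma cong_gap (a b N: int) : 0 < N -> modz a N = modz b N -> a = b \/ a + N <= b \/ b + N <= a.
Proof.
move=> h e. have := modeqP h e. set k := (_ - _). move=> eb.
case: (ltgtP k 0) => hk.
- right; right. have : k <= -1 by lia. move=> hk'. nia.
- right; left. have : 1 <= k by lia. move=> hk'. nia.
- left. rewrite eb hk. lia.
Qed.

Lemma cong_add (a k N : int) : modz (a + k * N) N = modz a N.
Proof. by rewrite addrC; apply/eqP; rewrite modzMDl. Qed.

Lemma cong_addN (a N : int) : modz (a + N) N = modz a N.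
Proof. by have := cong_add a 1 N; rewrite mul1r. Qed.

Lemma cong_small (a b N : int) : 0 < N -> a < b -> b < a + N -> modz a N <> modz b N.
Proof. move=> h ab ba e. have := cong_gap h e. lia. Qed.

Lemma sgen_cases n (hn : (1 < n)%N) (i : 'I_n) x :
  (sgen i x = x + 1 /\ modz x n%:Z = modz (i:nat)%:Z n%:Z) \/
  (sgen i x = x - 1 /\ modz (x - 1) n%:Z = modz (i:nat)%:Z n%:Z /\ modz x n%:Z <> modz (i:nat)%:Z n%:Z) \/
  (sgen i x = x /\ modz x n%:Z <> modz (i:nat)%:Z n%:Z /\ modz (x - 1) n%:Z <> modz (i:nat)%:Z n%:Z).
Proof.
rewrite /sgen. case: eqP => h1; first by left.
case: eqP => h2; right; [left|right]; by [].
Qed.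

Lemma Npos n (hn : (1 < n)%N) : 0 < n%:Z.
Proof. lia. Qed.

Lemma sgenK n (hn : (1 < n)%N) (i : 'I_n) x : sgen i (sgen i x) = x.
Proof.
have N0 := Npos hn.
case: (sgen_cases hn i x) => [[-> h]|[[-> [h h']]|[e _]]]; last by rewrite !e.
- case: (sgen_cases hn i (x+1)) => [[-> h2]|[[-> _]|[-> [_ h2]]]]; try lia.
  + rewrite -h2 in h. have := cong_gap N0 h. lia.
  + by case: h2; have -> : x + 1 - 1 = x by lia.
- case: (sgen_cases hn i (x-1)) => [[-> h2]|[[-> [_ h2]]|[-> [h2 _]]]]; try lia.
Qed.

Lemma sgen_per n (hn : (1 < n)%N) (i : 'I_n) x : sgen i (x + n%:Z) = sgen i x + n%:Z.
Proof.
rewrite /sgen cong_addN.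
have -> : x + n%:Z - 1 = (x - 1) + n%:Z by lia.
rewrite cong_addN. case: eqP => _; first lia. case: eqP => _; lia.
Qed.

Lemma sgen_i n (hn : (1 < n)%N) (i : 'I_n) : sgen i (i:nat)%:Z = (i:nat)%:Z + 1.
Proof. by rewrite /sgen eqxx. Qed.

Lemma sgen_i1 n (hn : (1 < n)%N) (i : 'I_n) : sgen i ((i:nat)%:Z + 1) = (i:nat)%:Z.
Proof.
have N0 := Npos hn.
rewrite /sgen. case: eqP => h.
  by have := cong_gap N0 h; lia.
have -> : (i:nat)%:Z + 1 - 1 = (i:nat)%:Z by lia.
by rewrite eqxx; lia.
Qed.


Lemma sgen_at n (hn : (1 < n)%N) (i : 'I_n) b :
  modz b n%:Z = modz (i:nat)%:Z n%:Z -> sgen i b = b + 1 /\ sgen i (b + 1) = b.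
Proof.
have N0 := Npos hn. move=> h.
case: (sgen_cases hn i b) => [[-> _]|[[_ [_ h2]]|[_ [h2 _]]]]; try by case: h2.
split=> //.
case: (sgen_cases hn i (b+1)) => [[-> h2]|[[-> _]|[-> [_ h2]]]]; try lia.
- rewrite -h2 in h. have := cong_gap N0 h. lia.
- by case: h2; have -> : b + 1 - 1 = b by lia.
Qed.

Lemma sgen_mono n (hn : (1 < n)%N) (i : 'I_n) a b : b < a ->
  ~ (a = b + 1 /\ modz b n%:Z = modz (i:nat)%:Z n%:Z) -> sgen i b < sgen i a.
Proof.
have N0 := Npos hn. move=> ba nex.
case: (sgen_cases hn i b) => [[-> hb]|[[-> [hb hb']]|[-> [hb hb']]]];
case: (sgen_cases hn i a) => [[-> ha]|[[-> [ha ha']]|[-> [ha ha']]]]; try lia.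
- have hb2 := hb. rewrite -ha in hb2. have := cong_gap N0 hb2.
  case: (a =P b + 1) => e; last lia. by case: nex.
- case: (b =P a - 1) => e; last lia. case: hb. by rewrite e.
Qed.

Definition per n (f : int -> int) := forall x, f (x + n%:Z) = f x + n%:Z.

Lemma per_mul n f : per n f -> forall x (k : int), f (x + k * n%:Z) = f x + k * n%:Z.
Proof.
move=> fP.
have pos : forall (m : nat) x, f (x + m%:Z * n%:Z) = f x + m%:Z * n%:Z.
  elim=> [|m IH] x; first by rewrite !mul0r !addr0.
  have -> : x + m.+1%:Z * n%:Z = (x + m%:Z * n%:Z) + n%:Z by lia.
  rewrite fP IH. lia.
move=> x [m|m]; first exact: pos.
have := pos m.+1 (x + Negz m * n%:Z).
have -> : x + Negz m * n%:Z + m.+1%:Z * n%:Z = x by rewrite NegzE; lia.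
move=> ->. rewrite NegzE. lia.
Qed.

Lemma per_inv n f g : cancel f g -> cancel g f -> per n f -> per n g.
Proof.
move=> fK gK fP y. apply: (can_inj fK). by rewrite fP !gK.
Qed.

Lemma res_pres n (hn : (1 < n)%N) f g : cancel f g -> cancel g f -> per n f ->
  forall a b, (modz (f a) n%:Z = modz (f b) n%:Z) <-> (modz a n%:Z = modz b n%:Z).
Proof.
have N0 := Npos hn. move=> fK gK fP a b; split => h.
- have e := modeqP N0 h. set k := (_ - _) in e.
  rewrite -(per_mul fP) in e. have -> : b = a + k * n%:Z by exact: (can_inj fK).
  by rewrite cong_add.
- have e := modeqP N0 h. set k := (_ - _) in e. by rewrite e per_mul // cong_add.
Qed.

Definition canon n (p : int * int) :=
  (0 <= p.1 < n%:Z) /\ p.1 < p.2 /\ modz p.1 n%:Z != modz p.2 n%:Z.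

Lemma inv2E n f g (p : int * int) : cancel f g -> cancel g f ->
  is_inv2 n f p <-> canon n p /\ g p.2 < g p.1.
Proof.
move=> fK gK; split.
- move=> [h1 [h2 [h3 [a [b [ea [eb ab]]]]]]]. split => //.
  by rewrite -ea -eb !fK.
- move=> [[h1 [h2 h3]] h]. do 3 (split => //). exists (g p.1), (g p.2). by rewrite !gK.
Qed.

Lemma inv2_ext n f1 f2 p : f1 =1 f2 -> is_inv2 n f1 p <-> is_inv2 n f2 p.
Proof.
move=> e; split => [] [h1 [h2 [h3 [a [b [ea [eb ab]]]]]]]; do 3 (split => //);
 exists a, b; rewrite ?e // -?e //.
Qed.

Lemma cls2_le n a b : a <= b -> cls2 n a b = (a - divz a n%:Z * n%:Z, b - divz a n%:Z * n%:Z).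
Proof.
move=> ab. rewrite /cls2.
have -> : Num.min a b = a by lia. by have -> : Num.max a b = b by lia.
Qed.

Lemma cls2C n a b : cls2 n a b = cls2 n b a.
Proof.
rewrite /cls2. have -> : Num.min a b = Num.min b a by lia.
by have -> : Num.max a b = Num.max b a by lia.
Qed.

Lemma cls2_shift n (hn : (1 < n)%N) a b k : cls2 n (a + k * n%:Z) (b + k * n%:Z) = cls2 n a b.
Proof.
have N0 := Npos hn.
wlog ab : a b / a <= b.
  move=> H. case: (lerP a b) => h; first exact: H.
  rewrite cls2C [in RHS]cls2C. apply: H. lia.
rewrite !cls2_le; [|lia|lia].
rewrite [a + _]addrC divzMDl; last lia. congr pair; lia.
Qed.

Lemma cls2_canon n (hn : (1 < n)%N) p : 0 <= p.1 < n%:Z -> p.1 <= p.2 -> cls2 n p.1 p.2 = p.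
Proof.
move=> h1 h2. rewrite cls2_le // divz_small; last by rewrite absz_nat.
rewrite mul0r !subr0. by case: p h1 h2.
Qed.

Lemma canon_cls2 n (hn : (1 < n)%N) a b : modz a n%:Z != modz b n%:Z -> canon n (cls2 n a b).
Proof.
have N0 := Npos hn.
wlog ab : a b / a <= b.
  move=> H. case: (lerP a b) => h; first exact: H.
  rewrite cls2C eq_sym. apply: H. lia.
move=> hm. rewrite cls2_le //= /canon /=.
have ne : a != b by apply: contraNneq hm => ->.
split; first by have := divz_eq a n%:Z; have := modz_ge0 a (d := n%:Z); have := ltz_pmod a N0; lia.
split; first lia.
by rewrite -!mulNr !cong_add.
Qed.

Lemma canon_eq n (hn : (1 < n)%N) p : canon n p -> cls2 n p.1 p.2 = p.
Proof. move=> [h1 [h2 _]]. apply: cls2_canon => //; exact: ltW. Qed.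


Lemma inv_cls n (hn : (1 < n)%N) f g : cancel f g -> cancel g f -> per n f ->
  forall a b, a < b -> modz a n%:Z != modz b n%:Z ->
  is_inv2 n f (cls2 n a b) <-> g b < g a.
Proof.
move=> fK gK fP a b ab hm. have gP := per_inv fK gK fP.
rewrite (inv2E _ _ fK gK). have hc := canon_cls2 hn hm.
rewrite cls2_le /=; last lia. rewrite cls2_le in hc; last lia.
have := per_mul gP a (- divz a n%:Z). have := per_mul gP b (- divz a n%:Z).
rewrite !mulNr => -> ->.
split; [case=> _ h; lia| move=> h; split => //; lia].
Qed.

Lemma cls2_rep n a b : exists k : int,
  cls2 n a b = (a + k * n%:Z, b + k * n%:Z) \/ cls2 n a b = (b + k * n%:Z, a + k * n%:Z).
Proof.
case: (lerP a b) => h.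
- exists (- divz a n%:Z). left. rewrite cls2_le //. congr pair; lia.
- exists (- divz b n%:Z). right. rewrite cls2C cls2_le; last lia. congr pair; lia.
Qed.

Section Delta.
Variables (n : nat) (hn : (1 < n)%N) (f g : int -> int).
Hypotheses (fK : cancel f g) (gK : cancel g f) (fP : per n f).
Variable (i : 'I_n).
Let I := (i : nat)%:Z.
Let c := cls2 n (f I) (f (I + 1)).

Lemma fsK : cancel (f \o sgen i) (sgen i \o g).
Proof. move=> x /=. by rewrite fK sgenK. Qed.
Lemma fsK' : cancel (sgen i \o g) (f \o sgen i).
Proof. move=> x /=. by rewrite sgenK. Qed.
Lemma fsP : per n (f \o sgen i).
Proof. move=> x /=. by rewrite sgen_per. Qed.

Lemma exc_c b : modz b n%:Z = modz I n%:Z -> cls2 n (f b) (f (b+1)) = c.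
Proof.
have N0 := Npos hn. move=> h. have e := modeqP N0 (esym h). set k := (_ - _) in e.
rewrite e /c. have -> : I + k * n%:Z + 1 = (I + 1) + k * n%:Z by lia.
by rewrite !(per_mul fP) cls2_shift.
Qed.

Lemma delta_ne p : p <> c -> is_inv2 n (f \o sgen i) p <-> is_inv2 n f p.
Proof.
have N0 := Npos hn.
move=> pc. rewrite (inv2E _ _ fsK fsK') (inv2E _ _ fK gK) /=.
case: p pc => p1 p2 pc /=.
suff H : canon n (p1, p2) -> (sgen i (g p2) < sgen i (g p1) <-> g p2 < g p1).
  by split=> -[hc h]; split => //; apply/(H hc).
move=> hc. have E : cls2 n p1 p2 = (p1,p2) := canon_eq hn hc.
case: hc => [_ [/= h12 _]].
have ne : g p1 <> g p2 by move/(can_inj gK); lia.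
have X1 : ~ (g p2 = g p1 + 1 /\ modz (g p1) n%:Z = modz I n%:Z).
  move=> [e1 e2]. apply: pc. have := exc_c e2. by rewrite -e1 !gK E.
have X2 : ~ (g p1 = g p2 + 1 /\ modz (g p2) n%:Z = modz I n%:Z).
  move=> [e1 e2]. apply: pc. have := exc_c e2. by rewrite -e1 !gK cls2C E.
split => h.
- case: (ltgtP (g p2) (g p1)) => hlt; [by []| |by case: ne].
  have := sgen_mono hn (i:=i) hlt X1. lia.
- exact: (sgen_mono hn (i:=i) h X2).
Qed.

Lemma c_canon : canon n c.
Proof.
have N0 := Npos hn. apply: canon_cls2 => //. apply/eqP.
rewrite (res_pres hn fK gK fP). apply: cong_small => //; lia.
Qed.

Lemma delta_eq : is_inv2 n (f \o sgen i) c <-> ~ is_inv2 n f c.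
Proof.
have N0 := Npos hn. have cc := c_canon.
rewrite (inv2E _ _ fsK fsK') (inv2E _ _ fK gK).
have [k hk] := cls2_rep n (f I) (f (I + 1)).
have e1 : f I + k * n%:Z = f (I + k * n%:Z) := esym (per_mul fP I k).
have e2 : f (I + 1) + k * n%:Z = f ((I + k * n%:Z) + 1).
  by rewrite -(per_mul fP); congr f; lia.
have hb : modz (I + k * n%:Z) n%:Z = modz I n%:Z by rewrite cong_add.
have [s1 s2] := sgen_at hn hb.
rewrite -/c e1 e2 in hk.
move: cc; case: hk => -> cc /=; rewrite !fK s1 s2.
- split; [move=> _ [_ ?]; lia | move=> _; split => //; lia].
- split; [case=> _ ?; lia | move=> H; exfalso; apply: H; split => //; lia].
Qed.

End Delta.


Lemma inv2_ext' n f1 f2 p : f1 =1 f2 -> is_inv2 n f1 p -> is_inv2 n f2 p.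
Proof. by move=> e h; apply: (proj1 (inv2_ext n p e)). Qed.

Section Words.
Variables (n : nat) (hn : (1 < n)%N).

Lemma wp_inv (ws : seq 'I_n) : exists g, cancel (word_prod ws) g /\ cancel g (word_prod ws).
Proof.
elim: ws => [|i t [g [K1 K2]]]; first by exists id.
exists (g \o sgen i); split => x /=; by rewrite ?sgenK ?K1 ?K2 ?sgenK.
Qed.

Lemma wp_per (ws : seq 'I_n) : per n (word_prod ws).
Proof. elim: ws => [|i t IH] x //=. by rewrite IH sgen_per. Qed.

Lemma size_refl (f : int -> int) (ws : seq 'I_n) : size (refl_aux f ws) = size ws.
Proof. elim: ws f => [|i t IH] f //=. by rewrite IH. Qed.

Lemma wp_rcons (ws : seq 'I_n) j x : word_prod (rcons ws j) x = word_prod ws (sgen j x).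
Proof. elim: ws => [|i t IH] //=. by rewrite IH. Qed.

Lemma refl_rcons (f : int -> int) (ws : seq 'I_n) j :
  refl_aux f (rcons ws j) =
  rcons (refl_aux f ws) (cls2 n (f (word_prod ws (j:nat)%:Z)) (f (word_prod ws ((j:nat)%:Z + 1)))).
Proof. elim: ws f => [|i t IH] f //=. by rewrite IH. Qed.

Lemma inv_word_sub (ws : seq 'I_n) : forall f g, cancel f g -> cancel g f -> per n f ->
  forall p, is_inv2 n (f \o word_prod ws) p -> is_inv2 n f p \/ p \in refl_aux f ws.
Proof.
elim: ws => [|i t IH] f g fK gK fP p.
  by move=> h; left; move: h; apply: inv2_ext'.
move=> h.
have := IH _ _ (fsK hn fK i) (fsK' hn gK i) (fsP hn fP i) p.
case. - by move: h; apply: inv2_ext'.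
- move=> h'. have [pc|pc] := eqVneq p (cls2 n (f (i:nat)%:Z) (f ((i:nat)%:Z + 1))).
    by right; rewrite /= pc mem_head.
  left. have pc' : p <> cls2 n (f (i:nat)%:Z) (f ((i:nat)%:Z + 1)) by apply/eqP.
  by apply/(delta_ne hn fK gK fP pc').
- by move=> hin; right; rewrite /= in_cons hin orbT.
Qed.

Lemma inv_word_prefix (ws : seq 'I_n) : forall f g, cancel f g -> cancel g f -> per n f ->
  uniq (refl_aux f ws) -> (forall p, p \in refl_aux f ws -> ~ is_inv2 n f p) ->
  forall j p, is_inv2 n (f \o word_prod (take j ws)) p <-> is_inv2 n f p \/ p \in take j (refl_aux f ws).
Proof.
elim: ws => [|i t IH] f g fK gK fP U D j p.
  have -> : is_inv2 n (f \o word_prod (take j [::])) p <-> is_inv2 n f p := @inv2_ext n _ _ p (fun x => erefl).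
  by split; [left|case].
case: j => [|j].
  have -> : is_inv2 n (f \o word_prod (take 0 (i :: t))) p <-> is_inv2 n f p := @inv2_ext n _ _ p (fun x => erefl).
  by split; [left|case].
set c := cls2 n (f (i:nat)%:Z) (f ((i:nat)%:Z + 1)).
have /= /andP [cnin U'] := U.
have Dc : ~ is_inv2 n f c by apply: D; rewrite /= mem_head.
have D' : forall p, p \in refl_aux (f \o sgen i) t -> ~ is_inv2 n (f \o sgen i) p.
  move=> q hq. have qc : q <> c by move=> e; move: cnin; rewrite -/c -e hq.
  rewrite (delta_ne hn fK gK fP qc). apply: D. by rewrite /= in_cons hq orbT.
have := IH _ _ (fsK hn fK i) (fsK' hn gK i) (fsP hn fP i) U' D' j p.
rewrite /= in_cons.
have -> : is_inv2 n (f \o (sgen i \o word_prod (take j t))) p <->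
          is_inv2 n ((f \o sgen i) \o word_prod (take j t)) p := @inv2_ext n _ _ p (fun x => erefl).
move=> ->.
have [pc|pc] := eqVneq p c.
  rewrite pc /=. split=> _; [by right| left; apply/(delta_eq hn fK gK fP); exact: Dc].
have pc' : p <> c by apply/eqP.
rewrite (delta_ne hn fK gK fP pc') /=. exact: iff_refl.
Qed.

End Words.


Lemma id_noinv n p : ~ is_inv2 n id p.
Proof. move=> [_ [h12 [_ [a [b [ea [eb ab]]]]]]]. rewrite /= in ea eb. subst. lia. Qed.

Lemma cls2_eq_res n (hn : (1 < n)%N) a b a' b' : a < b -> a' < b' -> cls2 n a b = cls2 n a' b' ->
  modz a n%:Z = modz a' n%:Z /\ b - a = b' - a'.
Proof.
move=> ab ab'. rewrite !cls2_le; [|lia|lia]. case=> e1 e2. split; last lia.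
have -> : a = a' + (divz a n%:Z - divz a' n%:Z) * n%:Z by lia.
by rewrite cong_add.
Qed.

Section Fwd.
Variables (n : nat) (hn : (1 < n)%N) (ws : seq 'I_n).
Hypothesis U : uniq (reflection_seq n ws).
Let rho := reflection_seq n ws.

Lemma KF j p : p \in take j rho <-> is_inv2 n (word_prod (take j ws)) p.
Proof.
have := @inv_word_prefix n hn ws id id (fun _ => erefl) (fun _ => erefl) (fun _ => erefl) U
  (fun p _ => @id_noinv n p) j p.
move=> H.
have E : is_inv2 n (word_prod (take j ws)) p <-> is_inv2 n (id \o word_prod (take j ws)) p :=
  inv2_ext n p (fun _ => erefl).
rewrite E H. split; [by move=> h; right | case; [by move/id_noinv | by []]].
Qed.

Lemma fwd_pairs : cond_pairs n rho.
Proof.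
have N0 := Npos hn.
move=> x y xy hm hA hD.
set A := cls2 n x y in hA *. set D := cls2 n x (y + n%:Z) in hD *.
have AD : A != D.
  apply/eqP => /(cls2_eq_res hn xy) => /(_ ltac:(lia)) [_]. lia.
rewrite ltn_neqAle. apply/andP; split.
  apply: contra AD => /eqP e. by rewrite -(nth_index A hA) e nth_index.
rewrite leqNgt. apply/negP => lt.
set j := (index D rho).+1.
have hD' : D \in take j rho by rewrite in_take // ltnSn.
have hA' : A \notin take j rho by rewrite in_take // ltnS -ltnNge.
have [g [K1 K2]] := wp_inv hn (take j ws).
have P := wp_per hn (take j ws).
have gP := per_inv K1 K2 P.
move/KF: hD'. rewrite /D (inv_cls hn K1 K2 P); [|lia|by rewrite cong_addN].
rewrite gP => h1.
move: hA' => /negP; apply. apply/KF. rewrite /A (inv_cls hn K1 K2 P) //. lia.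
Qed.

Lemma fwd_triples : cond_triples n rho.
Proof.
have N0 := Npos hn.
move=> x y z xy yz hxy hxz hyz /=.
have xz : x < z by lia.
have nAB : cls2 n x y != cls2 n x z.
  apply/eqP => /(cls2_eq_res hn xy xz) [_]. lia.
have nAC : cls2 n x y != cls2 n y z.
  apply/eqP => /(cls2_eq_res hn xy yz) [h _]. by move/eqP: hxy.
have nBC : cls2 n x z != cls2 n y z.
  apply/eqP => /(cls2_eq_res hn xz yz) [h _]. by move/eqP: hxy.
apply: comb3 => // j.
have [g [K1 K2]] := wp_inv hn (take j ws).
have P := wp_per hn (take j ws).
have eA : (cls2 n x y \in take j rho) = (g y < g x).
  apply/idP/idP => [/KF|h]; first by rewrite (inv_cls hn K1 K2 P).
  by apply/KF; rewrite (inv_cls hn K1 K2 P).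
have eB : (cls2 n x z \in take j rho) = (g z < g x).
  apply/idP/idP => [/KF|h]; first by rewrite (inv_cls hn K1 K2 P).
  by apply/KF; rewrite (inv_cls hn K1 K2 P).
have eC : (cls2 n y z \in take j rho) = (g z < g y).
  apply/idP/idP => [/KF|h]; first by rewrite (inv_cls hn K1 K2 P).
  by apply/KF; rewrite (inv_cls hn K1 K2 P).
rewrite eA eB eC. lia.
Qed.

End Fwd.


Lemma triple_distinct n (hn : (1 < n)%N) x y z : x < y -> y < z -> modz x n%:Z != modz y n%:Z ->
  modz x n%:Z != modz z n%:Z -> modz y n%:Z != modz z n%:Z ->
  [/\ cls2 n x y != cls2 n x z, cls2 n x y != cls2 n y z & cls2 n x z != cls2 n y z].
Proof.
move=> xy yz hxy hxz hyz. have xz : x < z by lia.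
split.
- apply/eqP => /(cls2_eq_res hn xy xz) [_]. lia.
- apply/eqP => /(cls2_eq_res hn xy yz) [h _]. by move/eqP: hxy.
- apply/eqP => /(cls2_eq_res hn xz yz) [h _]. by move/eqP: hxy.
Qed.

Section Last.
Variables (n : nat) (hn : (1 < n)%N) (w g : int -> int).
Hypotheses (K1 : cancel w g) (K2 : cancel g w) (wP : per n w).
Variables (r : seq (int * int)) (x y : int).
Let rho := rcons r (x, y).
Hypotheses (U : uniq rho) (memb : forall p, p \in rho <-> is_inv2 n w p)
  (ct : cond_triples n rho) (cp : cond_pairs n rho).

Lemma mem_inv a b : a < b -> modz a n%:Z != modz b n%:Z -> (cls2 n a b \in rho) = (g b < g a).
Proof.
move=> ab hm. apply/idP/idP => [/memb|h]; first by rewrite (inv_cls hn K1 K2 wP).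
by apply/memb; rewrite (inv_cls hn K1 K2 wP).
Qed.

Lemma filter_last (L : seq (int * int)) : (x, y) \in L ->
  last (x, y) [seq p <- rho | p \in L] = (x, y) /\ [seq p <- rho | p \in L] != [::].
Proof. move=> h. by rewrite /rho filter_rcons h last_rcons; split => //; case: (filter _ _). Qed.

Lemma last_adj : g x = g y + 1.
Proof.
have N0 := Npos hn. have gP := per_inv K1 K2 wP.
have ein : (x, y) \in rho by rewrite mem_rcons mem_head.
have /memb /(inv2E _ _ K1 K2) [ce /= lt] := ein.
have Ece : cls2 n x y = (x, y) := canon_eq hn ce.
case: ce => [/= x0 [xy hxy]].
have idxe : index (x, y) rho = size r.
  rewrite /rho -cats1 index_cat. have /andP [nin _] : ((x,y) \notin r) && uniq r by rewrite -rcons_uniq.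
  by rewrite (negPf nin) /= eqxx addn0.
have idx_lt : forall p, p \in rho -> (index p rho <= size r)%N.
  by move=> p hp; rewrite -ltnS -(size_rcons r (x,y)) index_mem.
case: (ltrP (g y + n%:Z) (g x)) => h1.
  exfalso.
  have hx' : x - n%:Z < y - n%:Z by lia.
  have hm' : modz (x - n%:Z) n%:Z != modz (y - n%:Z) n%:Z.
    by have := cong_add x (-1) n%:Z; have := cong_add y (-1) n%:Z; rewrite !mulN1r => -> ->.
  have := cp hx' hm'.
  have -> : y - n%:Z + n%:Z = y by lia.
  have -> : cls2 n (x - n%:Z) (y - n%:Z) = (x, y).
    by have := cls2_shift hn x y (-1); rewrite !mulN1r Ece.
  move=> /(_ ein).
  have hD : cls2 n (x - n%:Z) y \in rho.
    rewrite mem_inv; [|lia|]. 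
    + have := per_mul gP x (-1). rewrite !mulN1r => ->. lia.
    + by have := cong_add x (-1) n%:Z; rewrite !mulN1r => ->.
  move=> /(_ hD). rewrite idxe. have := idx_lt _ hD. lia.
case: (ltrP (g y + 1) (g x)) => h2; last lia.
exfalso.
set m := g y + 1. set z := w m.
have gz : g z = m by rewrite /z K1.
have hzx : modz z n%:Z != modz x n%:Z.
  apply/eqP => /(res_pres hn K2 K1 gP). rewrite gz. apply: cong_small => //; lia.
have hzy : modz z n%:Z != modz y n%:Z.
  apply/eqP => /(res_pres hn K2 K1 gP). rewrite gz => /esym. apply: cong_small => //; lia.
have zx : z != x by apply: contraNneq hzx => ->.
have zy : z != y by apply: contraNneq hzy => ->.
case: (ltrP z x) => hz1.
-
  have := ct hz1 xy hzx hzy hxy => /= -[k hk].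
  have [d1 d2 d3] := triple_distinct hn hz1 xy hzx hzy hxy.
  rewrite Ece in d2 d3 hk.
  have [hl hne] := filter_last (L := [:: cls2 n z x; cls2 n z y; (x, y)]) ltac:(by rewrite !inE eqxx ?orbT).
  have [H1 _ _] := last3 d1 d2 d3 hk hl hne.
  move: H1. rewrite eqxx /= !mem_filter !inE !eqxx ?orbT /=.
  rewrite (mem_inv hz1 hzx) (mem_inv _ hzy); last lia. rewrite gz. lia.
case: (ltrP z y) => hz2.
-
  have hxz : x < z by rewrite lt_neqAle eq_sym zx.
  have hxz' : modz x n%:Z != modz z n%:Z by rewrite eq_sym.
  have := ct hxz hz2 hxz' hxy hzy => /= -[k hk].
  have [d1 d2 d3] := triple_distinct hn hxz hz2 hxz' hxy hzy.
  rewrite Ece in d1 d3 hk.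
  have [hl hne] := filter_last (L := [:: cls2 n x z; (x, y); cls2 n z y]) ltac:(by rewrite !inE eqxx ?orbT).
  have [_ H1 _] := last3 d1 d2 d3 hk hl hne.
  move: H1. rewrite eqxx /= !mem_filter !inE !eqxx ?orbT /=.
  rewrite (mem_inv hxz hxz') (mem_inv hz2 hzy) gz. lia.
-
  have hyz : y < z by rewrite lt_neqAle eq_sym zy.
  have hxz : x < z by lia.
  have hxz' : modz x n%:Z != modz z n%:Z by rewrite eq_sym.
  have hyz' : modz y n%:Z != modz z n%:Z by rewrite eq_sym.
  have := ct xy hyz hxy hxz' hyz' => /= -[k hk].
  have [d1 d2 d3] := triple_distinct hn xy hyz hxy hxz' hyz'.
  rewrite Ece in d1 d2 hk.
  have [hl hne] := filter_last (L := [:: (x, y); cls2 n x z; cls2 n y z]) ltac:(by rewrite !inE eqxx ?orbT).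
  have [_ _ H1] := last3 d1 d2 d3 hk hl hne.
  move: H1. rewrite eqxx /= !mem_filter !inE !eqxx ?orbT /=.
  rewrite (mem_inv hxz hxz') (mem_inv hyz hyz') gz. lia.
Qed.

End Last.


Definition Tsum n (f : int -> int) (a : int) :=
  \sum_(i < n) (f (a + (i:nat)%:Z) - (a + (i:nat)%:Z)).

Lemma T_succ n (hn : (1 < n)%N) f a : per n f -> Tsum n f (a + 1) = Tsum n f a.
Proof.
move=> fP. case: n hn fP => [//|n'] hn fP.
rewrite /Tsum big_ord_recr big_ord_recl /=.
have -> : a + 1 + n'%:Z = a + n'.+1%:Z by lia.
rewrite fP addr0 addrC. congr (_ + _); first lia.
apply: eq_bigr => i _. rewrite /bump /=. congr (f _ - _); lia.
Qed.

Lemma T_nat n (hn : (1 < n)%N) f : per n f -> forall k : nat, Tsum n f k%:Z = Tsum n f 0.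
Proof.
move=> fP; elim => [//|k IH]. have -> : k.+1%:Z = k%:Z + 1 by lia. by rewrite T_succ.
Qed.

Lemma sgen_fix n (hn : (1 < n)%N) (i : 'I_n) x : modz x n%:Z <> modz (i:nat)%:Z n%:Z ->
  modz (x - 1) n%:Z <> modz (i:nat)%:Z n%:Z -> sgen i x = x.
Proof. by rewrite /sgen; case: eqP => //; case: eqP. Qed.

Lemma T_sgen n (hn : (1 < n)%N) f (i : 'I_n) : Tsum n (f \o sgen i) (i:nat)%:Z = Tsum n f (i:nat)%:Z.
Proof.
have N0 := Npos hn.
case: n hn N0 i => [|[|n']] // hn N0 i.
rewrite /Tsum !big_ord_recl /bump /= !addr0 sgen_i //.
have -> : (i:nat)%:Z + (1%N)%:Z = (i:nat)%:Z + 1 by [].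
rewrite sgen_i1 //.
have E : forall a b c d : int, a - b + (c - d) = c - b + (a - d) by move=> *; lia.
rewrite !addrA. congr (_ + _); first lia.
apply: eq_bigr => t _. have ht := ltn_ord t. rewrite /bump !leq0n !add1n sgen_fix //.
- apply: nesym. apply: cong_small => //; lia.
- apply: nesym. apply: cong_small => //; lia.
Qed.

Lemma sum_T n f : \sum_(i < n) f (i.+1)%:Z = Tsum n f 1 + \sum_(i < n) (i.+1)%:Z.
Proof.
rewrite /Tsum -big_split. apply: eq_bigr => i _ /=. have -> : 1 + (i:nat)%:Z = (i.+1)%:Z by lia. lia.
Qed.

Lemma sum_sgen n (hn : (1 < n)%N) f (i : 'I_n) : per n f ->
  \sum_(j < n) (f \o sgen i) (j.+1)%:Z = \sum_(j < n) f (j.+1)%:Z.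
Proof.
move=> fP. have fsP' : per n (f \o sgen i) by move=> x /=; rewrite sgen_per.
rewrite !sum_T. congr (_ + _).
have -> : (1 : int) = 0 + 1 by [].
rewrite !T_succ // -(T_nat hn fsP' i) T_sgen //. exact: (T_nat hn fP i).
Qed.

Lemma sum_nat n : \sum_(i < n) (i.+1)%:Z = ('C(n.+1, 2))%:Z.
Proof.
elim: n => [|n IH]; first by rewrite big_ord0.
rewrite big_ord_recr /= IH [in RHS]binS bin1 PoszD; reflexivity.
Qed.

Lemma noinv_id n (hn : (1 < n)%N) w g : cancel w g -> cancel g w -> per n w ->
  (forall p, ~ is_inv2 n w p) -> \sum_(i < n) w (i.+1)%:Z = ('C(n.+1, 2))%:Z -> w =1 id.
Proof.
move=> K1 K2 wP noi hs.
have N0 := Npos hn.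
have mono : forall a b, a < b -> w a < w b.
  move=> a b ab. case: (ltrP (w a) (w b)) => // h. exfalso.
  have ne : w b != w a by apply/eqP => /(can_inj K1); lia.
  have hlt : w b < w a by rewrite lt_neqAle ne.
  have [hr|hr] := eqVneq (modz (w b) n%:Z) (modz (w a) n%:Z).
  + move/(res_pres hn K1 K2 wP): hr => hr.
    have e := modeqP N0 hr. set k := (_ - _) in e.
    have := per_mul wP b k. rewrite -e. set t := k * n%:Z in e *. lia.
  + apply: (noi (cls2 n (w b) (w a))). rewrite (inv_cls hn K1 K2 wP) // !K1 //.
have succ : forall x, w (x + 1) = w x + 1.
  move=> x. set t := g (w x + 1). have wt : w t = w x + 1 by rewrite /t K2.
  case: (ltrP x t) => h.
  - case: (ltrP (x + 1) t) => h'.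
    + have := mono _ _ h'. have := mono x (x+1) ltac:(lia). lia.
    + have -> : x + 1 = t by lia. exact: wt.
  - case: (ltrP t x) => h'.
    + have := mono _ _ h'. lia.
    + have e : t = x by lia. rewrite e in wt. lia.
have lin : forall x, w x = x + w 0.
  have pos : forall k : nat, w k%:Z = k%:Z + w 0.
    elim => [|k IH]; first by rewrite add0r.
    have -> : k.+1%:Z = k%:Z + 1 by lia. rewrite succ IH. lia.
  have neg : forall k : nat, w (- k%:Z) = - k%:Z + w 0.
    elim => [|k IH]; first by rewrite oppr0 add0r.
    have := succ (- k.+1%:Z). have -> : - k.+1%:Z + 1 = - k%:Z by lia. lia.
  move=> [k|k]; first exact: pos. rewrite NegzE. exact: neg.
have c0 : w 0 = 0.
  move: hs. rewrite -sum_nat.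
  under eq_bigr => i _ do rewrite lin.
  rewrite big_split /= sumr_const card_ord. rewrite -mulr_natr.
  move=> h. have h2 : w 0 * n%:R = 0 by apply: (addrI (\sum_(i < n) (i.+1)%:Z)); rewrite addr0.
  move/eqP: h2; rewrite mulf_eq0 pnatr_eq0 => /orP [/eqP //|/eqP]; lia.
move=> x. rewrite lin c0. lia.
Qed.


Lemma bwd n (hn : (1 < n)%N) (rho : seq (int * int)) : forall w g, cancel w g -> cancel g w -> per n w ->
  \sum_(i < n) w (i.+1)%:Z = ('C(n.+1, 2))%:Z ->
  uniq rho -> (forall p, p \in rho <-> is_inv2 n w p) -> cond_triples n rho -> cond_pairs n rho ->
  exists ws : seq 'I_n, (forall x, word_prod ws x = w x) /\ reflection_seq n ws = rho.
Proof.
have N0 := Npos hn.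
elim/last_ind: rho => [|r [x y] IH] w g K1 K2 wP hs U memb ct cp.
  have wid := noinv_id hn K1 K2 wP (fun p h => notF (proj2 (memb p) h)) hs.
  by exists [::]; split => // z; rewrite wid.
have ladj := last_adj hn K1 K2 wP U memb ct cp.
set jj := g y.
have hjl : (absz (modz jj n%:Z) < n)%N.
  have := modz_ge0 jj (d := n%:Z). have := ltz_pmod jj N0. lia.
set i : 'I_n := Ordinal hjl.
have hI : (i : nat)%:Z = modz jj n%:Z.
  rewrite /=. have := modz_ge0 jj (d := n%:Z). lia.
set k := divz jj n%:Z.
have ejj : (i:nat)%:Z = jj + (- k) * n%:Z by rewrite hI; have := divz_eq jj n%:Z; lia.
have wI : w (i:nat)%:Z = y - k * n%:Z.
  by rewrite ejj (per_mul wP) /jj K2 mulNr.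
have wI1 : w ((i:nat)%:Z + 1) = x - k * n%:Z.
  have -> : (i:nat)%:Z + 1 = g x + (- k) * n%:Z by rewrite ejj; lia.
  by rewrite (per_mul wP) K2 mulNr.
have ein : (x, y) \in rcons r (x, y) by rewrite mem_rcons mem_head.
have /memb /(inv2E _ _ K1 K2) [ce _] := ein.
have ce' : cls2 n (w (i:nat)%:Z) (w ((i:nat)%:Z + 1)) = (x, y).
  rewrite wI wI1 cls2C. have := cls2_shift hn x y (- k). rewrite !mulNr => ->.
  exact: (@canon_eq n hn (x,y) ce).
have /andP [nin U'] : ((x,y) \notin r) && uniq r by rewrite -rcons_uniq.
have memb' : forall p, p \in r <-> is_inv2 n (w \o sgen i) p.
  move=> p. have [->|pe] := eqVneq p (x, y).
    rewrite (negPf nin). have := delta_eq hn K1 K2 wP i. rewrite ce' => ->.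
    split => // h. exfalso. apply: h. exact/memb.
  have pc : p <> cls2 n (w (i:nat)%:Z) (w ((i:nat)%:Z + 1)) by rewrite ce'; exact/eqP.
  rewrite (delta_ne hn K1 K2 wP pc) -memb mem_rcons in_cons (negPf pe). by [].
have ct' : cond_triples n r.
  move=> a b c ab bc h1 h2 h3 /=. have := ct a b c ab bc h1 h2 h3 => /= -[kk hk].
  move: hk. rewrite filter_rcons. case: ifP => _ hk; last by exists kk.
  case: hk => hk; have := pref_take hk => ->; exists (minn (size [seq p <- r | p \in [:: cls2 n a b; cls2 n a c; cls2 n b c]]) kk); by [left|right].
have cp' : cond_pairs n r.
  move=> a b ab hm hA hD. have := cp a b ab hm.
  rewrite -!cats1 !index_cat hA hD !mem_cat hA hD. by apply.
have hs' : \sum_(j < n) (w \o sgen i) (j.+1)%:Z = ('C(n.+1, 2))%:Z by rewrite sum_sgen.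
have [ws' [ww' E']] := IH _ _ (fsK hn K1 i) (fsK' hn K2 i) (fsP hn wP i) hs' U' memb' ct' cp'.
exists (rcons ws' i). split.
  move=> z. by rewrite wp_rcons ww' /= sgenK.
rewrite /reflection_seq refl_rcons. rewrite /reflection_seq in E'. rewrite E' /= !ww' /=.
by rewrite sgen_i // sgen_i1 // cls2C ce'.
Qed.

Local Close Scope ring_scope.

Theorem corollary4p2 (n : nat) (w : int -> int) (rho : seq (int * int)) :
  (2 <= n)%N -> is_affine_perm n w -> is_total_order_inv2 n w rho ->
  (is_reflection_order n w rho <-> cond_triples n rho /\ cond_pairs n rho).
Proof.
move=> hn [[g K1 K2] [wP hs]] [U memb].
split.
- move=> [ws [[wsw _] E]]. rewrite -E in U *. split; [exact: fwd_triples | exact: fwd_pairs].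
- move=> [ct cp]. have [ws [ww E]] := bwd hn K1 K2 wP hs U memb ct cp.
  exists ws. split => //. split => // ws' ww'.
  have sub : {subset rho <= refl_aux id ws'}.
    move=> p /memb h.
    have h' : is_inv2 n (id \o word_prod ws') p by move: h; apply: inv2_ext' => z /=; rewrite ww'.
    case: (inv_word_sub hn (f := id) (g := id) (fun _ => erefl) (fun _ => erefl) (fun _ => erefl) h') => //.
    by move/id_noinv.
  rewrite -(size_refl id ws) -(size_refl id ws').
  have -> : refl_aux id ws = rho by exact: E.
  exact: uniq_leq_size U sub.
Qed.
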